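(* Let $h:[0,\infty)\to[0,\infty)$ satisfy $h(0)=0$ and be concave, and suppose that either $h(t)/t\not\to\infty$ as $t\to0^+$, or $h(t)/t\not\to0$ as $t\to\infty$. Then there exists an infinite metric space $(X,d)$ such that $(X,h\circ d)$ admits an isometric embedding into the $2$-dimensional Euclidean space $\mathbb R^2$. *)

(* Defs.v *)
From Stdlib Require Import Reals List.
Open Scope R_scope.

Definition maps_nonneg (h : R -> R) : Prop :=
  forall t, 0 <= t -> 0 <= h t.

Definition concave_on_nonneg (h : R -> R) : Prop :=
  forall x y lam, 0 <= x -> 0 <= y -> 0 <= lam <= 1 ->
    lam * h x + (1 - lam) * h y <= h (lam * x + (1 - lam) * y).

Definition ratio_to_infty_at_0 (h : R -> R) : Prop :=
  forall M : R, exists delta, 0 < delta /\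
    forall t, 0 < t < delta -> M < h t / t.

Definition ratio_to_0_at_infty (h : R -> R) : Prop :=
  forall eps : R, 0 < eps -> exists T, forall t, T < t -> Rabs (h t / t) < eps.

Definition is_metric {X : Type} (d : X -> X -> R) : Prop :=
  (forall x y, 0 <= d x y) /\
  (forall x y, d x y = 0 <-> x = y) /\
  (forall x y, d x y = d y x) /\
  (forall x y z, d x z <= d x y + d y z).

Definition infinite_type (X : Type) : Prop :=
  forall l : list X, exists x, ~ In x l.

Definition dist2 (p q : R * R) : R :=
  sqrt ((fst p - fst q)^2 + (snd p - snd q)^2).

(* Main.v *)
Require Import Defs.
From Stdlib Require Import Reals List Lra Lia Psatz Ranalysis5 ClassicalEpsilon Classical.
Open Scope R_scope.

Definition HH (h : R -> R) := maps_nonneg h /\ h 0 = 0 /\ concave_on_nonneg h.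

Lemma L_ratio h : HH h -> forall s t, 0 < s -> s <= t -> s * h t <= t * h s.
Proof.
  intros [Hn [H0 Hc]] s t Hs Hst.
  assert (Ht : 0 < t) by lra.
  specialize (Hc t 0 (s/t) ltac:(lra) ltac:(lra)).
  assert (0 <= s/t <= 1).
  { split. apply Rlt_le, Rdiv_lt_0_compat; lra.
    apply (Rmult_le_reg_r t); [lra|]. field_simplify; lra. }
  specialize (Hc H). rewrite H0 in Hc.
  replace (s / t * t + (1 - s / t) * 0) with s in Hc by (field; lra).
  assert (s / t * h t <= h s) by lra.
  apply (Rmult_le_reg_r (/t)). apply Rinv_0_lt_compat; lra.
  replace (s * h t * / t) with (s / t * h t) by (field; lra).
  replace (t * h s * / t) with (h s) by (field; lra). lra.
Qed.

Lemma L_mono h : HH h -> forall x y, 0 <= x -> x <= y -> h x <= h y.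
Proof.
  intros HHh x y Hx Hxy. destruct HHh as [Hn [H0 Hc]].
  destruct (Req_dec x y) as [->|Hne]; [lra|].
  destruct (Rle_lt_dec (h x) (h y)) as [|Hlt]; [auto|exfalso].
  assert (hxp : 0 < h x) by (pose proof (Hn y ltac:(lra)); lra).
  set (Y := y + (y - x) * h x / (h x - h y) + 1).
  assert (HY1 : (y - x) * h x / (h x - h y) > 0).
  { apply Rdiv_lt_0_compat; [|lra]. apply Rmult_lt_0_compat; lra. }
  assert (HYy : y < Y) by (unfold Y; lra).
  set (lam := (Y - y) / (Y - x)).
  assert (Hl : 0 <= lam <= 1).
  { unfold lam; split. apply Rlt_le, Rdiv_lt_0_compat; lra.
    apply (Rmult_le_reg_r (Y - x)); [lra|]. field_simplify; lra. }
  specialize (Hc x Y lam Hx ltac:(lra) Hl).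
  replace (lam * x + (1 - lam) * Y) with y in Hc by (unfold lam; field; lra).
  pose proof (Hn Y ltac:(lra)).
  assert (lam * h x <= h y) by nra.
  assert (lam * h x > h y).
  { unfold lam.
    apply (Rmult_lt_reg_r (Y - x)); [lra|].
    replace ((Y - y) / (Y - x) * h x * (Y - x)) with ((Y-y) * h x) by (field; lra).
    assert (Y - x = (y - x) + (y - x) * h x / (h x - h y) + 1) by (unfold Y; ring).
    assert (Y - y = (y - x) * h x / (h x - h y) + 1) by (unfold Y; ring).
    rewrite H2, H3.
    set (q := (y - x) * h x / (h x - h y)).
    assert (q * (h x - h y) = (y - x) * h x) by (unfold q; field; lra).
    nra. }
  lra.
Qed.

Lemma L_pos h : HH h -> 0 < h 1 -> forall t, 0 < t -> 0 < h t.
Proof.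
  intros HHh H1 t Ht.
  destruct (Rle_lt_dec 1 t).
  - pose proof (L_mono h HHh 1 t ltac:(lra) r). lra.
  - pose proof (L_ratio h HHh t 1 Ht ltac:(lra)). nra.
Qed.

Lemma L_lip h : HH h -> forall u v, 0 < u -> u <= v -> h v - h u <= (v - u) * (h u / u).
Proof.
  intros HHh u v Hu Huv. pose proof (L_ratio h HHh u v Hu Huv).
  apply (Rmult_le_reg_r u); [lra|].
  replace ((v - u) * (h u / u) * u) with ((v-u) * h u) by (field; lra). nra.
Qed.

Lemma L_cont h : HH h -> forall x, 0 < x -> continuity_pt h x.
Proof.
  intros HHh x Hx eps Heps.
  set (K := h (x/2) / (x/2)).
  assert (HK : 0 <= K).
  { unfold K. destruct HHh as [Hn _]. pose proof (Hn (x/2) ltac:(lra)).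
    apply Rmult_le_pos; [lra|]. apply Rlt_le, Rinv_0_lt_compat; lra. }
  assert (Hb : forall u, x/2 <= u -> h u / u <= K).
  { intros u Hu. pose proof (L_ratio h HHh (x/2) u ltac:(lra) Hu). unfold K.
    apply (Rmult_le_reg_r (u * (x/2))). nra.
    replace (h u / u * (u * (x / 2))) with (x/2 * h u) by (field; lra).
    replace (h (x / 2) / (x / 2) * (u * (x / 2))) with (u * h (x/2)) by (field; lra). lra. }
  exists (Rmin (x/2) (eps / (K + 1))). split.
  { apply Rmin_glb_lt. lra. apply Rdiv_lt_0_compat; lra. }
  intros y [_ Hy]. unfold R_dist in *. simpl in *. unfold R_dist in *.
  pose proof (Rmin_l (x/2) (eps/(K+1))). pose proof (Rmin_r (x/2) (eps/(K+1))).
  assert (Hd : Rabs (y - x) < eps / (K+1)) by lra.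
  assert (Hd2 : Rabs (y - x) < x/2) by lra.
  assert (Hkey: K * Rabs (y - x) < eps).
  { apply Rle_lt_trans with ((K+1) * Rabs (y - x)). pose proof (Rabs_pos (y - x)). nra.
    apply (Rmult_lt_reg_r (/(K+1))). apply Rinv_0_lt_compat; lra.
    replace ((K + 1) * Rabs (y - x) * / (K + 1)) with (Rabs (y - x)) by (field; lra).
    replace (eps * / (K+1)) with (eps / (K+1)) by (field; lra). lra. }
  destruct (Rle_lt_dec x y).
  - rewrite Rabs_right in Hd2, Hkey by lra.
    pose proof (L_lip h HHh x y Hx r). pose proof (Hb x ltac:(lra)).
    pose proof (L_mono h HHh x y ltac:(lra) r).
    rewrite Rabs_right by lra. nra.
  - rewrite Rabs_left in Hd2, Hkey by lra.
    pose proof (L_lip h HHh y x ltac:(lra) ltac:(lra)). pose proof (Hb y ltac:(lra)).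
    pose proof (L_mono h HHh y x ltac:(lra) ltac:(lra)).
    rewrite Rabs_left1 by lra. nra.
Qed.

Lemma L_ivt h : HH h -> forall lo hi s, 0 < lo -> lo <= hi -> h lo <= s -> s <= h hi ->
  exists t, lo <= t <= hi /\ h t = s.
Proof.
  intros HHh lo hi s Hlo Hlh H1 H2.
  destruct (Req_dec (h lo) s). exists lo; split; [lra|auto].
  destruct (Req_dec (h hi) s). exists hi; split; [lra|auto].
  assert (lo < hi).
  { destruct (Req_dec lo hi); [subst; lra|lra]. }
  destruct (IVT_interv (fun t => h t - s) lo hi) as [z [Hz1 Hz2]]; try lra.
  - intros a Ha. apply continuity_pt_minus. apply L_cont; auto; lra.
    apply continuity_pt_const. intros ? ?; reflexivity.
  - exists z. split; auto. lra.
Qed.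

Lemma caseA_bound h : HH h -> ~ ratio_to_infty_at_0 h -> exists M, forall s, 0 < s -> h s <= M * s.
Proof.
  intros HHh Hn. unfold ratio_to_infty_at_0 in Hn.
  apply not_all_ex_not in Hn. destruct Hn as [M HM]. exists M.
  intros s Hs.
  destruct (classic (exists t, 0 < t < s /\ h t / t <= M)) as [[t [Ht1 Ht2]]|Hno].
  - pose proof (L_ratio h HHh t s ltac:(lra) ltac:(lra)).
    assert (h t <= M * t).
    { apply (Rmult_le_reg_r (/t)). apply Rinv_0_lt_compat; lra.
      replace (M * t * /t) with M by (field; lra). exact Ht2. }
    nra.
  - exfalso. apply HM. exists s. split; auto. intros t Ht.
    destruct (Rlt_le_dec M (h t / t)); auto. exfalso; apply Hno; exists t; split; auto.
Qed.

Lemma caseA_analytic h : HH h -> 0 < h 1 -> ~ ratio_to_infty_at_0 h ->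
  (forall eps, 0 < eps <= 1/2 -> exists beta, 0 < beta <= h 1 /\
     forall A B, 0 <= A -> A <= B -> h B < beta -> h B + (1 - eps) * h A <= h (A + B))
  /\ (forall s, 0 < s <= h 1 -> exists t, 0 < t /\ h t = s).
Proof.
  intros HHh H1 Hn.
  destruct (caseA_bound h HHh Hn) as [M HM].
  set (E := fun y => exists t, 0 < t /\ y = h t / t).
  assert (HbE : bound E).
  { exists M. intros y [t [Ht ->]]. pose proof (HM t Ht).
    apply (Rmult_le_reg_r t); auto. replace (h t / t * t) with (h t) by (field; lra). lra. }
  assert (HeE : exists y, E y) by (exists (h 1 / 1); exists 1; split; [lra|auto]).
  destruct (completeness E HbE HeE) as [c0 [Hub Hlub]].
  assert (A1 : forall t, 0 < t -> h t <= c0 * t).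
  { intros t Ht. assert (h t / t <= c0) by (apply Hub; exists t; split; auto).
    apply (Rmult_le_reg_r (/t)). apply Rinv_0_lt_compat; lra.
    replace (c0 * t * /t) with c0 by (field; lra). exact H. }
  assert (A3 : 0 < c0) by (pose proof (A1 1 ltac:(lra)); lra).
  assert (A2 : forall eta, 0 < eta -> exists tau, 0 < tau /\ forall t, 0 < t <= tau -> (c0 - eta) * t <= h t).
  { intros eta Heta.
    destruct (classic (exists t, 0 < t /\ c0 - eta < h t / t)) as [[t [Ht Ht2]]|Hno].
    - exists t. split; auto. intros u [Hu Hut].
      pose proof (L_ratio h HHh u t Hu Hut).
      assert ((c0 - eta) * t < h t).
      { apply (Rmult_lt_reg_r (/t)). apply Rinv_0_lt_compat; lra.
        replace ((c0-eta) * t * /t) with (c0-eta) by (field; lra). exact Ht2. }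
      nra.
    - exfalso. assert (c0 <= c0 - eta); [|lra]. apply Hlub.
      intros y [t [Ht ->]]. destruct (Rle_lt_dec (h t / t) (c0 - eta)); auto.
      exfalso; apply Hno; exists t; split; auto. }
  split.
  - intros eps Heps.
    destruct (A2 (eps * c0 / 2) ltac:(nra)) as [tau [Htau Htau2]].
    set (m := Rmin tau 1).
    assert (Hm : 0 < m <= tau /\ m <= 1).
    { unfold m; split; [split|]. apply Rmin_glb_lt; lra. apply Rmin_l. apply Rmin_r. }
    exists (h (m/2)). split. split. apply L_pos; auto; lra.
    apply L_mono; auto; lra.
    intros A B HA HAB HB.
    assert (HBm : B < m/2).
    { destruct (Rlt_le_dec B (m/2)); auto. pose proof (L_mono h HHh (m/2) B ltac:(lra) r). lra. }
    destruct (Req_dec B 0) as [HB0|HB0].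
    + assert (A = 0) by lra. subst. destruct HHh as [_ [H0 _]]. rewrite Rplus_0_r, H0. lra.
    + assert (HBp : 0 < B) by lra.
      destruct HHh as [Hn0 [H0 Hc]].
      pose proof (Hc (2*B) B (A/B) ltac:(lra) ltac:(lra)) as Hcc.
      assert (Hl : 0 <= A / B <= 1).
      { split. apply Rmult_le_pos; auto. apply Rlt_le, Rinv_0_lt_compat; lra.
        apply (Rmult_le_reg_r B); auto. field_simplify; lra. }
      specialize (Hcc Hl).
      replace (A / B * (2 * B) + (1 - A / B) * B) with (A + B) in Hcc by (field; lra).
      pose proof (Htau2 (2*B) ltac:(lra)).
      pose proof (A1 B HBp).
      assert (hA : h A <= c0 * A).
      { destruct (Req_dec A 0). subst. rewrite H0. lra. apply A1. lra. }
      set (l := A / B) in *.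
      assert (HAl : A = l * B) by (unfold l; field; lra).
      (* h(A+B) >= h B + l (h(2B) - h B) >= h B + l (2B(c0-eta) - c0 B) = h B + A (c0 - 2 eta) *)
      assert (h (A + B) >= h B + l * (h (2*B) - h B)) by lra.
      assert (l * (h (2*B) - h B) >= l * ((c0 - eps * c0 / 2) * (2 * B) - c0 * B)) by nra.
      assert (l * ((c0 - eps * c0 / 2) * (2 * B) - c0 * B) = (1 - eps) * (c0 * A)) by (rewrite HAl; field).
      assert ((1 - eps) * h A <= (1 - eps) * (c0 * A)) by nra.
      lra.
  - intros s [Hs1 Hs2].
    destruct (L_ivt h HHh (s / c0) 1 s) as [t [Ht1 Ht2]].
    + apply Rdiv_lt_0_compat; lra.
    + apply (Rmult_le_reg_r c0); auto. field_simplify; try lra. pose proof (A1 1 ltac:(lra)). lra.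
    + pose proof (A1 (s/c0) ltac:(apply Rdiv_lt_0_compat; lra)).
      replace (c0 * (s/c0)) with s in H by (field; lra). lra.
    + lra.
    + exists t. split; auto. pose proof (Rdiv_lt_0_compat s c0 Hs1 A3). lra.
Qed.

Lemma caseB_analytic h : HH h -> 0 < h 1 -> ~ ratio_to_0_at_infty h ->
  (forall eps, 0 < eps <= 1/2 -> exists alpha, h 1 <= alpha /\
     forall A B, 0 <= A -> A <= B -> alpha < h A -> h B + (1 - eps) * h A <= h (A + B))
  /\ (forall s, h 1 <= s -> exists t, 0 < t /\ h t = s).
Proof.
  intros HHh H1 Hn. unfold ratio_to_0_at_infty in Hn.
  apply not_all_ex_not in Hn. destruct Hn as [e0 He0].
  apply imply_to_and in He0. destruct He0 as [He0 Hno].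
  assert (Hlow : forall s, 0 < s -> e0 * s <= h s).
  { intros s Hs. destruct (classic (e0 * s <= h s)) as [|Hc]; auto. exfalso.
    apply Hno. exists s. intros t Ht.
    pose proof (L_ratio h HHh s t Hs ltac:(lra)).
    destruct HHh as [Hnn _]. pose proof (Hnn t ltac:(lra)).
    rewrite Rabs_right by (apply Rle_ge, Rmult_le_pos; [lra| apply Rlt_le, Rinv_0_lt_compat; lra]).
    apply (Rmult_lt_reg_r t); [lra|]. replace (h t / t * t) with (h t) by (field; lra).
    assert (s * h t < s * (e0 * t)) by nra. nra. }
  set (E := fun y => exists t, 0 < t /\ y = - (h t / t)).
  assert (HbE : bound E).
  { exists 0. intros y [t [Ht ->]]. destruct HHh as [Hnn _]. pose proof (Hnn t ltac:(lra)).
    assert (0 <= h t / t). apply Rmult_le_pos; auto. apply Rlt_le, Rinv_0_lt_compat; lra. lra. }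
  assert (HeE : exists y, E y) by (exists (-(h 1 / 1)); exists 1; split; [lra|auto]).
  destruct (completeness E HbE HeE) as [m [Hub Hlub]].
  set (L := - m).
  assert (B1 : forall t, 0 < t -> L * t <= h t).
  { intros t Ht. assert (- (h t / t) <= m) by (apply Hub; exists t; split; auto).
    assert (L <= h t / t) by (unfold L; lra).
    apply (Rmult_le_reg_r (/t)). apply Rinv_0_lt_compat; lra.
    replace (h t * /t) with (h t / t) by (field; lra).
    replace (L * t * /t) with L by (field; lra). exact H0. }
  assert (B3 : e0 <= L).
  { unfold L. assert (m <= - e0); [|lra]. apply Hlub. intros y [t [Ht ->]].
    pose proof (Hlow t Ht). assert (e0 <= h t / t); [|lra].
    apply (Rmult_le_reg_r t); auto. replace (h t / t * t) with (h t) by (field; lra). lra. }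
  assert (B2 : forall eta, 0 < eta -> exists T, 0 < T /\ forall t, T <= t -> h t <= (L + eta) * t).
  { intros eta Heta.
    destruct (classic (exists t, 0 < t /\ h t / t < L + eta)) as [[t [Ht Ht2]]|Hno2].
    - exists t. split; auto. intros u Hu.
      pose proof (L_ratio h HHh t u Ht Hu).
      assert (h t < (L + eta) * t).
      { apply (Rmult_lt_reg_r (/t)). apply Rinv_0_lt_compat; lra.
        replace ((L+eta) * t * /t) with (L+eta) by (field; lra).
        replace (h t * /t) with (h t / t) by (field; lra). exact Ht2. }
      nra.
    - exfalso. assert (m <= - (L + eta)); [|unfold L in *; lra]. apply Hlub.
      intros y [t [Ht ->]]. destruct (Rle_lt_dec (L + eta) (h t / t)). lra.
      exfalso; apply Hno2; exists t; split; auto. }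
  split.
  - intros eps Heps.
    destruct (B2 (eps * L / 2) ltac:(nra)) as [T [HT HT2]].
    exists (h (Rmax T 1)). split. apply L_mono; auto; try lra. apply Rmax_r.
    intros A B HA HAB HhA.
    assert (HAT : Rmax T 1 < A).
    { destruct (Rlt_le_dec (Rmax T 1) A); auto. pose proof (L_mono h HHh A (Rmax T 1) HA r). lra. }
    pose proof (Rmax_l T 1). pose proof (Rmax_r T 1).
    set (eta := eps * L / 2) in *.
    assert (Heta : 0 < eta) by (unfold eta; nra).
    assert (HetaL : eta <= L) by (unfold eta; nra).
    pose proof (HT2 A ltac:(lra)) as hAup.
    set (Y := 2 * B + h B / eta + 1).
    destruct HHh as [Hnn [Hz0 Hc]].
    assert (hBnn : 0 <= h B) by (apply Hnn; lra).
    assert (HhBe : 0 <= h B / eta) by (apply Rmult_le_pos; auto; apply Rlt_le, Rinv_0_lt_compat; lra).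
    assert (HY : A + B < Y) by (unfold Y; lra).
    set (lam := (Y - A - B) / (Y - B)).
    assert (Hl : 0 <= lam <= 1).
    { unfold lam; split. apply Rlt_le, Rdiv_lt_0_compat; lra.
      apply (Rmult_le_reg_r (Y - B)); [lra|]. field_simplify; lra. }
    pose proof (Hc B Y lam ltac:(lra) ltac:(lra) Hl) as Hcc.
    replace (lam * B + (1 - lam) * Y) with (A + B) in Hcc by (unfold lam; field; lra).
    pose proof (B1 Y ltac:(lra)) as hY.
    assert (H1l : 1 - lam = A / (Y - B)) by (unfold lam; field; lra).
    (* h(A+B) >= hB + (1-lam)(h Y - h B) >= hB + A/(Y-B) (L Y - hB) *)
    assert (Hkey : (L - eta) * (Y - B) <= L * Y - h B).
    { assert (eta * (h B / eta) = h B) by (field; lra). unfold Y. nra. }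
    assert (HAy : A / (Y - B) * (L * Y - h B) >= A * (L - eta)).
    { apply Rle_ge. apply (Rmult_le_reg_r (Y - B)); [lra|].
      replace (A / (Y - B) * (L * Y - h B) * (Y - B)) with (A * (L * Y - h B)) by (field; lra).
      nra. }
    assert (HH3 : h (A + B) >= h B + (1 - lam) * (h Y - h B)) by lra.
    rewrite H1l in HH3.
    assert (HH4 : (1 - lam) * (h Y - h B) >= (1 - lam) * (L * Y - h B)) by nra.
    rewrite H1l in HH4.
    assert ((1 - eps) * h A <= A * (L - eta)).
    { assert ((1 - eps) * (L + eta) <= L - eta) by (unfold eta; nra). nra. }
    lra.
  - intros s Hs.
    assert (HL : 0 < L) by lra.
    destruct (L_ivt h HHh 1 (s / L + 1) s) as [t [Ht1 Ht2]]; try lra.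
    + assert (0 <= s / L). apply Rmult_le_pos. lra. apply Rlt_le, Rinv_0_lt_compat; lra. lra.
    + pose proof (B1 (s/L+1)). assert (0 <= s / L). apply Rmult_le_pos. lra. apply Rlt_le, Rinv_0_lt_compat; lra.
      specialize (H ltac:(lra)). replace (L * (s / L + 1)) with (s + L) in H by (field; lra). lra.
    + exists t; split; auto; lra.
Qed.

Definition Edot (s t : R) := ((1 - s*s)*(1 - t*t) + 4*s*t) / ((1 + s*s)*(1 + t*t)).
Definition sq (n : nat) := / (INR n + 2).
Definition Em (a b : nat) := Edot (sq a) (sq b).
Definition gam (n : nat) := / ((INR n + 3)^4).
Definition pt (rr : nat -> R) (n : nat) : R * R :=
  (rr n * ((1 - sq n * sq n) / (1 + sq n * sq n)), rr n * (2 * sq n / (1 + sq n * sq n))).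
Definition D (rr : nat -> R) a b := rr a ^ 2 + rr b ^ 2 - 2 * rr a * rr b * Em a b.
Definition W (rr : nat -> R) x y z := rr x * rr z * Em x z - rr x * rr y * Em x y - rr y * rr z * Em y z + rr y ^ 2.

Lemma Em_sym a b : Em a b = Em b a.
Proof. unfold Em, Edot. f_equal; ring. Qed.

Lemma dist_pt rr a b : dist2 (pt rr a) (pt rr b) = sqrt (D rr a b).
Proof.
  unfold dist2, pt, D, Em, Edot. simpl. f_equal.
  assert (0 < 1 + sq a * sq a) by nra. assert (0 < 1 + sq b * sq b) by nra.
  field. lra.
Qed.

Lemma D_W rr x y z : D rr x z = D rr x y + D rr z y - 2 * W rr x y z.
Proof. unfold D, W. rewrite (Em_sym z y). ring. Qed.

Lemma Edot_bounds s t g : 0 < t -> t <= s -> s <= 1/2 -> 0 <= g -> g <= s - t ->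
  1/2 <= Edot s t <= 1 - g * g.
Proof.
  intros. unfold Edot.
  assert (Hd : 0 < (1 + s*s)*(1+t*t)) by nra.
  assert (s*s <= 1/4) by nra. assert (t*t <= 1/4) by nra.
  assert (0 <= s*s) by nra. assert (0 <= t*t) by nra.
  assert (Hd2 : (1 + s*s)*(1+t*t) <= 2) by nra.
  assert (E1 : ((1 - s*s)*(1 - t*t) + 4*s*t) / ((1 + s*s)*(1 + t*t)) = 1 - 2*(s-t)*(s-t) / ((1 + s*s)*(1 + t*t)))
    by (field; nra).
  rewrite E1. split.
  - assert (2*(s-t)*(s-t) / ((1 + s*s)*(1 + t*t)) <= 1/2); [|lra].
    apply (Rmult_le_reg_r ((1 + s*s)*(1 + t*t))); auto. field_simplify; nra.
  - assert (g*g <= 2*(s-t)*(s-t) / ((1 + s*s)*(1 + t*t))); [|lra].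
    apply (Rmult_le_reg_r ((1 + s*s)*(1 + t*t))); auto. field_simplify; try lra. nra.
Qed.

Lemma sq_pos n : 0 < sq n.
Proof. unfold sq. apply Rinv_0_lt_compat. pose proof (pos_INR n). lra. Qed.

Lemma sq_le n : sq n <= 1/2.
Proof. unfold sq. pose proof (pos_INR n).
  apply (Rmult_le_reg_r (INR n + 2)); [lra|]. field_simplify; lra. Qed.

Lemma sq_gap a b : (a < b)%nat -> / ((INR a + 3)^2) <= sq a - sq b.
Proof.
  intros Hab. unfold sq. assert (INR a + 1 <= INR b).
  { rewrite <- S_INR. apply le_INR. lia. }
  pose proof (pos_INR a).
  assert (/ (INR b + 2) <= / (INR a + 3)).
  { apply Rinv_le_contravar; lra. }
  assert (/ (INR a + 2) - / (INR a + 3) = / ((INR a + 2) * (INR a + 3))) by (field; lra).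
  assert (/ ((INR a + 3)^2) <= / ((INR a + 2) * (INR a + 3))).
  { apply Rinv_le_contravar. nra. nra. }
  lra.
Qed.

Lemma gam_eq n : gam n = / ((INR n + 3)^2) * / ((INR n + 3)^2).
Proof. unfold gam. pose proof (pos_INR n). field. lra. Qed.

Lemma gam_pos n : 0 < gam n.
Proof. unfold gam. apply Rinv_0_lt_compat. pose proof (pos_INR n). apply pow_lt. lra. Qed.

Lemma gam_le n : gam n <= 1/81.
Proof. unfold gam. pose proof (pos_INR n).
  assert (81 <= (INR n + 3)^4) by (simpl; nra).
  apply (Rmult_le_reg_r ((INR n + 3)^4)). apply pow_lt; lra.
  field_simplify; try lra. Qed.

Lemma gam_anti m n : (m <= n)%nat -> gam n <= gam m.
Proof. intros. unfold gam. apply Rinv_le_contravar. apply pow_lt. pose proof (pos_INR m); lra.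
  apply pow_incr. pose proof (pos_INR m). split. lra. apply le_INR in H. lra. Qed.

Lemma Em_lt a b : (a < b)%nat -> 1/2 <= Em a b <= 1 - gam a.
Proof.
  intros. unfold Em. rewrite gam_eq.
  apply Edot_bounds. apply sq_pos.
  pose proof (sq_gap a b H). assert (0 <= / ((INR a + 3)^2)).
  { apply Rlt_le, Rinv_0_lt_compat. pose proof (pos_INR a). nra. } lra.
  apply sq_le. apply Rlt_le, Rinv_0_lt_compat. pose proof (pos_INR a). nra.
  apply sq_gap; auto.
Qed.

Lemma Em_ne a b : a <> b -> 1/2 <= Em a b <= 1.
Proof.
  intros. destruct (Nat.lt_gt_cases a b) as [[Hl|Hl] _]. lia.
  pose proof (Em_lt a b Hl). pose proof (gam_pos a). lra.
  rewrite Em_sym. pose proof (Em_lt b a Hl). pose proof (gam_pos b). lra.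
Qed.

Lemma D_lower rr a b : a <> b -> (rr a - rr b)^2 <= D rr a b.
Proof. intros. pose proof (Em_ne a b H). unfold D.
Abort.

Lemma D_sym rr a b : D rr a b = D rr b a.
Proof. unfold D. rewrite Em_sym. ring. Qed.

Lemma D_lower rr a b : 0 < rr a -> 0 < rr b -> a <> b -> (rr a - rr b)^2 <= D rr a b.
Proof. intros. pose proof (Em_ne a b H1). unfold D. assert (0 < rr a * rr b) by nra. nra. Qed.

Lemma D_upper rr a b : 0 < rr a -> 0 < rr b -> a <> b -> D rr a b <= (rr a + rr b)^2.
Proof. intros. pose proof (Em_ne a b H1). unfold D. assert (0 < rr a * rr b) by nra. nra. Qed.

Lemma sqrt_ge c X : 0 <= c -> c^2 <= X -> c <= sqrt X.
Proof. intros. rewrite <- (sqrt_pow2 c H). apply sqrt_le_1_alt. simpl in *; lra. Qed.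

Lemma sqrt_le c X : 0 <= c -> 0 <= X -> X <= c^2 -> sqrt X <= c.
Proof. intros. rewrite <- (sqrt_pow2 c H). apply sqrt_le_1_alt. simpl in *; lra. Qed.

Definition Good rr (Sc : R -> R -> Prop) x y z := exists eps, 0 < eps <= 1/4 /\
  - W rr x y z < (1 - 2*eps) * sqrt (D rr x y) * sqrt (D rr z y) /\
  Sc eps (sqrt (D rr x y)) /\ Sc eps (sqrt (D rr y z)).

Lemma Good_sym rr Sc x y z : Good rr Sc x y z -> Good rr Sc z y x.
Proof.
  intros [e [He [H1 [H2 H3]]]]. exists e. split; auto.
  assert (W rr z y x = W rr x y z) by (unfold W; rewrite (Em_sym z x), (Em_sym z y), (Em_sym y x); ring).
  rewrite H. split. lra. rewrite (D_sym rr y x), (D_sym rr z y). auto.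
Qed.

Lemma vertexQ rP rQ rS ePS ePQ eQS g a b :
  0 < rP -> 0 < rQ -> 0 < rS -> 0 < g <= 1/81 ->
  rP <= g/8 * rQ -> rQ <= g/8 * rS ->
  1/2 <= ePS -> ePQ <= 1 -> eQS <= 1 - g ->
  rQ - rP <= a -> rS - rQ <= b ->
  - (rP * rS * ePS - rP * rQ * ePQ - rQ * rS * eQS + rQ ^ 2) < (1 - 2 * (g/8)) * a * b.
Proof.
  intros.
  assert (H10 : - (rP * rS * ePS - rP * rQ * ePQ - rQ * rS * eQS + rQ ^ 2) <= rP * rQ + (1 - g) * rQ * rS).
  { assert (0 < rP * rS) by nra. assert (0 < rP * rQ) by nra. assert (0 < rQ * rS) by nra.
    assert (rP * rS * ePS >= 0) by nra. assert (rP * rQ * ePQ <= rP * rQ) by nra.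
    assert (rQ * rS * eQS <= (1-g) * rQ * rS) by nra. nra. }
  assert (H11 : rP * rQ <= (g/8) * (g/8) * rQ * rS) by nra.
  assert (Ha : (1 - g/8) * rQ <= a) by nra.
  assert (Hb : (1 - g/8) * rS <= b) by nra.
  assert (Hab : (1 - g/8) * rQ * ((1 - g/8) * rS) <= a * b).
  { apply Rmult_le_compat; nra. }
  assert (Hc : (g/8)*(g/8) + (1 - g) < (1 - 2*(g/8)) * (1 - g/8) * (1 - g/8)) by nra.
  assert (0 < rQ * rS) by nra.
  assert ((1 - 2*(g/8)) * ((1 - g/8) * rQ * ((1 - g/8) * rS)) <= (1 - 2*(g/8)) * (a * b)) by nra.
  nra.
Qed.

Lemma GoodTriple rr (Sc : R -> R -> Prop) P Q S m :
  0 < rr P -> 0 < rr Q -> 0 < rr S -> P <> Q -> Q <> S -> P <> S ->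
  rr P <= gam m / 8 * rr Q -> rr Q <= gam m / 8 * rr S ->
  Em Q S <= 1 - gam m ->
  Sc (gam m / 8) (sqrt (D rr P Q)) -> Sc (gam m / 8) (sqrt (D rr Q S)) ->
  Sc (gam m / 8) (sqrt (D rr P S)) ->
  Good rr Sc Q P S /\ Good rr Sc P Q S /\ Good rr Sc P S Q.
Proof.
  intros HP HQ HS nPQ nQS nPS H1 H2 HE S1 S2 S3.
  pose proof (gam_pos m). pose proof (gam_le m).
  assert (0 < rr P * rr Q) by nra. assert (0 < rr Q * rr S) by nra. assert (0 < rr P * rr S) by nra.
  pose proof (Em_ne P Q nPQ). pose proof (Em_ne Q S nQS). pose proof (Em_ne P S nPS).
  assert (HsPQ : rr Q - rr P <= sqrt (D rr P Q)).
  { apply sqrt_ge. nra. rewrite D_sym. replace ((rr Q - rr P)^2) with ((rr Q - rr P)^2) by ring.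
    apply D_lower; auto. }
  assert (HsQS : rr S - rr Q <= sqrt (D rr S Q)).
  { apply sqrt_ge. nra. apply D_lower; auto. }
  assert (HsPS : rr S - rr P <= sqrt (D rr S P)).
  { apply sqrt_ge. nra. apply D_lower; auto. }
  assert (Heps : 0 < gam m / 8 <= 1/4) by (split; lra).
  assert (Hpos : forall X, 0 <= sqrt X) by (intros; apply sqrt_pos).
  split; [|split].
  - exists (gam m / 8). split; auto. split; [|split].
    + unfold W. rewrite (Em_sym Q P).
      assert (0 < sqrt (D rr Q P)).
      { rewrite D_sym. nra. }
      assert (0 < sqrt (D rr S P)) by nra.
      assert (0 < (1 - 2 * (gam m / 8)) * sqrt (D rr Q P) * sqrt (D rr S P)).
      { apply Rmult_lt_0_compat; auto. apply Rmult_lt_0_compat; auto; lra. }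
      assert (rr Q * rr P * Em P Q <= rr Q * rr P) by nra.
      assert (rr P * rr S * Em P S <= rr P * rr S) by nra.
      assert (rr Q * rr S * Em Q S >= rr Q * rr S / 2) by nra.
      assert (rr Q * rr P <= rr Q * rr S / 8) by nra.
      assert (rr P * rr S <= rr Q * rr S / 8) by nra.
      nra.
    + rewrite D_sym; auto.
    + auto.
  - exists (gam m / 8). split; auto. split; [|split]; auto.
    unfold W.
    apply vertexQ with (g := gam m); auto; try lra.
  - exists (gam m / 8). split; auto. split; [|split].
    + unfold W.
      assert (0 < sqrt (D rr P S)) by (rewrite D_sym; nra).
      assert (0 < sqrt (D rr Q S)) by (rewrite D_sym; nra).
      assert (0 < (1 - 2 * (gam m / 8)) * sqrt (D rr P S) * sqrt (D rr Q S)).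
      { apply Rmult_lt_0_compat; auto. apply Rmult_lt_0_compat; auto; lra. }
      rewrite (Em_sym S Q).
      assert (rr P * rr Q * Em P Q >= 0) by nra.
      assert (rr P * rr S * Em P S <= rr P * rr S) by nra.
      assert (rr S * rr Q * Em Q S <= rr S * rr Q) by nra.
      assert (rr P * rr S <= rr S * rr S / 8) by nra.
      assert (rr S * rr Q <= rr S * rr S / 8) by nra.
      nra.
    + auto.
    + rewrite D_sym; auto.
Qed.

Lemma Em_refl a : Em a a = 1.
Proof. unfold Em, Edot. assert (0 < 1 + sq a * sq a) by nra. field. nra. Qed.

Lemma D_refl rr a : D rr a a = 0.
Proof. unfold D. rewrite Em_refl. ring. Qed.

Lemma nat_infinite : infinite_type nat.
Proof.
  intros l. exists (S (list_max l)). intros Hin.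
  assert (list_max l <= list_max l)%nat by lia.
  apply list_max_le in H. rewrite Forall_forall in H. specialize (H _ Hin). lia.
Qed.

Lemma core h rr (Sc : R -> R -> Prop) x y z A B :
  HH h -> Good rr Sc x y z ->
  (forall eps A B, 0 < eps <= 1/2 -> 0 <= A -> A <= B -> Sc eps (h A) -> Sc eps (h B) ->
      h B + (1 - eps) * h A <= h (A + B)) ->
  0 <= A -> A <= B -> h A = sqrt (D rr x y) -> h B = sqrt (D rr y z) -> 0 < h A ->
  sqrt (D rr x z) < h (A + B).
Proof.
  intros HHh [e [He [HW [S1 S2]]]] Hana HA HAB HhA HhB HApos.
  rewrite (D_sym rr z y) in HW. rewrite <- HhA, <- HhB in *.
  pose proof (Hana e A B ltac:(lra) HA HAB S1 S2).
  pose proof (L_mono h HHh A B HA HAB).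
  set (a := h A) in *. set (b := h B) in *.
  assert (Hc2 : D rr x z = a*a + b*b - 2 * W rr x y z).
  { rewrite (D_W rr x y z). rewrite HhA, HhB. rewrite (D_sym rr z y).
    assert (0 <= D rr x y). { pose proof (sqrt_pos (D rr x y)). destruct (Rle_lt_dec 0 (D rr x y)); auto.
      rewrite sqrt_neg_0 in HhA by lra. lra. }
    assert (0 <= D rr y z). { destruct (Rle_lt_dec 0 (D rr y z)); auto.
      rewrite sqrt_neg_0 in HhB by lra. lra. }
    rewrite !sqrt_sqrt by auto. ring. }
  assert (sqrt (D rr x z) < b + (1 - e) * a); [|lra].
  destruct (Rle_lt_dec 0 (D rr x z)) as [Hd|Hd].
  - apply Rnot_le_lt. intro Hc. set (c := sqrt (D rr x z)) in *.
    assert (c * c = D rr x z) by (apply sqrt_sqrt; auto).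
    assert (0 <= (1-e)*a) by (apply Rmult_le_pos; lra).
    assert ((b + (1-e)*a) * (b + (1-e)*a) <= c * c) by nra.
    clearbody a b c. assert (0 <= e*a) by nra. assert (Hea : e*a*a <= e*a*b) by (apply Rmult_le_compat_l; lra).
    assert (e*e*a*a >= 0) by nra.
    assert (c * c < a*a + b*b + 2*(1-2*e)*a*b) by nra.
    nra.
  - rewrite sqrt_neg_0 by lra. nra.
Qed.

Lemma build h rr (Sc : R -> R -> Prop) :
  HH h -> 0 < h 1 ->
  (forall n, 0 < rr n) -> (forall a b, a <> b -> rr a <> rr b) ->
  (forall a b, a <> b -> exists t, 0 < t /\ h t = sqrt (D rr a b)) ->
  (forall x y z, x <> y -> y <> z -> x <> z -> Good rr Sc x y z) ->
  (forall eps A B, 0 < eps <= 1/2 -> 0 <= A -> A <= B -> Sc eps (h A) -> Sc eps (h B) ->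
      h B + (1 - eps) * h A <= h (A + B)) ->
  exists (X : Type) (d : X -> X -> R),
    is_metric d /\ infinite_type X /\
    exists f : X -> R * R, forall x y, dist2 (f x) (f y) = h (d x y).
Proof.
  intros HHh H1 Hpos Hinj Hinv Hgood Hana.
  set (g := fun s => epsilon (inhabits 0) (fun t => 0 <= t /\ h t = s)).
  set (d := fun a b => g (sqrt (D rr a b))).
  assert (Hd : forall a b, 0 <= d a b /\ h (d a b) = sqrt (D rr a b)).
  { intros a b. unfold d, g. apply epsilon_spec.
    destruct (Nat.eq_dec a b) as [->|Hne].
    - exists 0. rewrite D_refl, sqrt_0. destruct HHh as [_ [H0 _]]. split; [lra|auto].
    - destruct (Hinv a b Hne) as [t [Ht1 Ht2]]. exists t. split; [lra|auto]. }
  assert (HDpos : forall a b, a <> b -> 0 < sqrt (D rr a b)).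
  { intros a b Hne. apply sqrt_lt_R0. pose proof (D_lower rr a b (Hpos a) (Hpos b) Hne).
    pose proof (Hinj a b Hne). assert (0 < (rr a - rr b)^2).
    { destruct (Rtotal_order (rr a) (rr b)) as [Hl|[He|Hl]]; [nra|contradiction|nra]. } lra. }
  assert (Hd0 : forall a, d a a = 0).
  { intros a. destruct (Hd a a) as [H2 H3]. rewrite D_refl, sqrt_0 in H3.
    destruct (Rle_lt_dec (d a a) 0). lra. pose proof (L_pos h HHh H1 _ r). lra. }
  assert (Hsym : forall a b, d a b = d b a).
  { intros. unfold d. rewrite D_sym. reflexivity. }
  exists nat, d. split; [|split].
  - split; [|split; [|split]].
    + intros; apply Hd.
    + intros a b. split.
      * intros Hz. destruct (Nat.eq_dec a b); auto. exfalso.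
        destruct (Hd a b) as [_ H3]. rewrite Hz in H3. destruct HHh as [_ [H0 _]].
        pose proof (HDpos a b n). lra.
      * intros ->. apply Hd0.
    + exact Hsym.
    + intros x y z.
      destruct (Nat.eq_dec x y) as [->|nxy]. rewrite Hd0. lra.
      destruct (Nat.eq_dec y z) as [->|nyz]. rewrite Hd0. lra.
      destruct (Nat.eq_dec x z) as [->|nxz]. rewrite Hd0. pose proof (Hd z y); pose proof (Hd y z). lra.
      assert (Hmain : forall x y z, x <> y -> y <> z -> x <> z -> d x y <= d y z -> d x z <= d x y + d y z).
      { clear x y z nxy nyz nxz. intros x y z nxy nyz nxz Hle.
        destruct (Hd x y) as [A1 A2]. destruct (Hd y z) as [B1 B2]. destruct (Hd x z) as [C1 C2].
        pose proof (core h rr Sc x y z (d x y) (d y z) HHh (Hgood x y z nxy nyz nxz) Hana A1 Hle A2 B2).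
        rewrite A2 in H. specialize (H (HDpos x y nxy)).
        destruct (Rle_lt_dec (d x z) (d x y + d y z)) as [|Hlt]; auto.
        pose proof (L_mono h HHh (d x y + d y z) (d x z) ltac:(lra) ltac:(lra)). lra. }
      destruct (Rle_lt_dec (d x y) (d y z)).
      * apply Hmain; auto.
      * rewrite (Hsym x z), (Hsym x y), (Hsym y z). rewrite Rplus_comm.
        apply Hmain; auto. rewrite (Hsym z y), (Hsym y x). lra.
  - exact nat_infinite.
  - exists (pt rr). intros x y. rewrite dist_pt. symmetry. apply Hd.
Qed.

Lemma good_all rr Sc :
  (forall i j k, (i < j)%nat -> (j < k)%nat -> Good rr Sc j i k /\ Good rr Sc i j k /\ Good rr Sc i k j) ->
  forall x y z, x <> y -> y <> z -> x <> z -> Good rr Sc x y z.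
Proof.
  intros H x y z nxy nyz nxz.
  destruct (Nat.lt_gt_cases x y) as [[Hxy|Hxy] _]; [lia| |];
  destruct (Nat.lt_gt_cases y z) as [[Hyz|Hyz] _]; try lia;
  destruct (Nat.lt_gt_cases x z) as [[Hxz|Hxz] _]; try lia.
  - apply (H x y z); auto.
  -
    apply (H x z y); auto.
  -
    apply Good_sym. apply (H z x y); auto.
  -
    apply (H y x z); auto.
  -
    apply Good_sym. apply (H y z x); auto.
  -
    apply Good_sym. apply (H z y x); auto.
Qed.

Definition dl (n : nat) := gam n / 8.

Lemma dl_bounds n : 0 < dl n <= 1/648.
Proof. unfold dl. pose proof (gam_pos n). pose proof (gam_le n). lra. Qed.

Lemma dl_anti m n : (m <= n)%nat -> dl n <= dl m.
Proof. intros. unfold dl. pose proof (gam_anti m n H). lra. Qed.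

Lemma large_case h : HH h -> 0 < h 1 -> ~ ratio_to_0_at_infty h ->
  exists (X : Type) (d : X -> X -> R),
    is_metric d /\ infinite_type X /\
    exists f : X -> R * R, forall x y, dist2 (f x) (f y) = h (d x y).
Proof.
  intros HHh H1 Hn.
  destruct (caseB_analytic h HHh H1 Hn) as [Han Hiv].
  set (P := fun eps al => h 1 <= al /\
     forall A B, 0 <= A -> A <= B -> al < h A -> h B + (1 - eps) * h A <= h (A + B)).
  set (al := fun eps => epsilon (inhabits 0) (P eps)).
  assert (Hal : forall eps, 0 < eps <= 1/2 -> P eps (al eps)).
  { intros. apply epsilon_spec. apply Han; auto. }
  assert (Hald : forall n, P (dl n) (al (dl n))).
  { intros n. apply Hal. pose proof (dl_bounds n). lra. }
  set (Sc := fun eps s => al eps < s).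
  set (rr := fix rr n := match n with
             | O => 2 * al (dl 0) + 1
             | S n' => Rmax (rr n' / dl (S n')) (2 * al (dl (S n')) + 1) end).
  assert (Hr1 : forall n, 2 * al (dl n) + 1 <= rr n).
  { intros [|n]; simpl. lra. apply Rmax_r. }
  assert (Hpos : forall n, 0 < rr n).
  { intros n. pose proof (Hr1 n). destruct (Hald n) as [Ha _]. lra. }
  assert (Hr2 : forall n, rr n <= dl (S n) * rr (S n)).
  { intros n. change (rr (S n)) with (Rmax (rr n / dl (S n)) (2 * al (dl (S n)) + 1)).
    pose proof (Rmax_l (rr n / dl (S n)) (2 * al (dl (S n)) + 1)).
    pose proof (dl_bounds (S n)).
    assert (rr n = dl (S n) * (rr n / dl (S n))) by (field; lra).
    nra. }
  assert (Hinc : forall n, rr n < rr (S n)).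
  { intros n. pose proof (Hr2 n). pose proof (Hpos (S n)). pose proof (dl_bounds (S n)). nra. }
  assert (Hmono : forall i j, (i < j)%nat -> rr i < rr j).
  { intros i j Hij. induction Hij. apply Hinc. pose proof (Hinc m). lra. }
  assert (Hsep : forall i j, (i < j)%nat -> rr i <= dl j * rr j).
  { intros i j Hij. destruct j. lia.
    pose proof (Hr2 j). destruct (Nat.eq_dec i j) as [->|]. auto.
    pose proof (Hmono i j ltac:(lia)). lra. }
  assert (Hdist : forall i j, (i < j)%nat -> rr j / 2 <= sqrt (D rr i j) /\ rr j / 2 <= sqrt (D rr j i)).
  { intros i j Hij. pose proof (Hsep i j Hij). pose proof (dl_bounds j). pose proof (Hpos j).
    assert (rr j / 2 <= rr j - rr i) by nra.
    assert (Hne : i <> j) by lia.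
    split.
    - apply sqrt_ge. lra. rewrite D_sym. pose proof (D_lower rr j i (Hpos j) (Hpos i) ltac:(lia)).
      assert ((rr j / 2)^2 <= (rr j - rr i)^2) by (pose proof (Hpos i); nra). lra.
    - apply sqrt_ge. lra. pose proof (D_lower rr j i (Hpos j) (Hpos i) ltac:(lia)).
      assert ((rr j / 2)^2 <= (rr j - rr i)^2) by (pose proof (Hpos i); nra). lra. }
  apply (build h rr Sc HHh H1 Hpos).
  - intros a b Hab. destruct (Nat.lt_gt_cases a b) as [[H|H] _]; auto.
    pose proof (Hmono a b H); lra. pose proof (Hmono b a H); lra.
  - intros a b Hab. apply Hiv.
    destruct (Nat.lt_gt_cases a b) as [[H|H] _]; auto.
    + destruct (Hdist a b H) as [H2 _]. pose proof (Hr1 b). destruct (Hald b) as [Ha _]. lra.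
    + destruct (Hdist b a H) as [_ H2]. pose proof (Hr1 a). destruct (Hald a) as [Ha _]. lra.
  - apply good_all. intros i j k Hij Hjk.
    assert (Hik : (i < k)%nat) by lia.
    pose proof (Hr1 j) as Hj. pose proof (Hsep j k Hjk). pose proof (dl_anti j k ltac:(lia)).
    pose proof (Hpos k).
    assert (rr j <= dl j * rr k) by nra.
    pose proof (dl_bounds j).
    destruct (Hdist i j Hij) as [Dij _]. destruct (Hdist j k Hjk) as [Djk _].
    destruct (Hdist i k Hik) as [Dik _].
    assert (rr j <= rr k / 2) by nra.
    apply (GoodTriple rr Sc i j k j); auto; try lia.
    + apply Hsep; auto.
    + apply Em_lt; auto.
    + unfold Sc. fold (dl j). lra.
    + unfold Sc. fold (dl j). lra.
    + unfold Sc. fold (dl j). lra.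
  - intros eps A B He HA HAB S1 S2. destruct (Hal eps He) as [_ Hk]. apply Hk; auto.
Qed.

Lemma small_case h : HH h -> 0 < h 1 -> ~ ratio_to_infty_at_0 h ->
  exists (X : Type) (d : X -> X -> R),
    is_metric d /\ infinite_type X /\
    exists f : X -> R * R, forall x y, dist2 (f x) (f y) = h (d x y).
Proof.
  intros HHh H1 Hn.
  destruct (caseA_analytic h HHh H1 Hn) as [Han Hiv].
  set (P := fun eps be => 0 < be <= h 1 /\
     forall A B, 0 <= A -> A <= B -> h B < be -> h B + (1 - eps) * h A <= h (A + B)).
  set (be := fun eps => epsilon (inhabits 0) (P eps)).
  assert (Hbe : forall eps, 0 < eps <= 1/2 -> P eps (be eps)).
  { intros. apply epsilon_spec. apply Han; auto. }
  assert (Hbed : forall n, P (dl n) (be (dl n))).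
  { intros n. apply Hbe. pose proof (dl_bounds n). lra. }
  set (Sc := fun eps s => s < be eps).
  set (rr := fix rr n := match n with
             | O => be (dl 0) / 4
             | S n' => Rmin (dl (S n') * rr n') (be (dl (S n')) / 4) end).
  assert (Hr1 : forall n, rr n <= be (dl n) / 4).
  { intros [|n]; simpl. lra. apply Rmin_r. }
  assert (Hr2 : forall n, rr (S n) <= dl (S n) * rr n).
  { intros n. apply Rmin_l. }
  assert (Hpos : forall n, 0 < rr n).
  { induction n; simpl. destruct (Hbed 0%nat) as [Hb _]. lra.
    apply Rmin_glb_lt. pose proof (dl_bounds (S n)). nra. destruct (Hbed (S n)) as [Hb _]. lra. }
  assert (Hdec : forall n, rr (S n) < rr n).
  { intros n. pose proof (Hr2 n). pose proof (Hpos n). pose proof (dl_bounds (S n)). nra. }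
  assert (Hmono : forall i j, (i < j)%nat -> rr j < rr i).
  { intros i j Hij. induction Hij. apply Hdec. pose proof (Hdec m). lra. }
  assert (Hsep : forall i j, (i < j)%nat -> rr j <= dl j * rr i).
  { intros i j Hij. destruct j. lia.
    pose proof (Hr2 j). destruct (Nat.eq_dec i j) as [->|]. auto.
    pose proof (Hmono i j ltac:(lia)). pose proof (dl_bounds (S j)). nra. }
  assert (Hdist : forall a b, a <> b -> sqrt (D rr a b) <= rr a + rr b).
  { intros a b Hab. apply sqrt_le. pose proof (Hpos a); pose proof (Hpos b); lra.
    pose proof (D_lower rr a b (Hpos a) (Hpos b) Hab). pose proof (pow2_ge_0 (rr a - rr b)). lra.
    apply D_upper; auto. }
  assert (Hle0 : forall n, rr n <= rr 0%nat).
  { intros [|n]. lra. pose proof (Hmono 0%nat (S n) ltac:(lia)). lra. }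
  apply (build h rr Sc HHh H1 Hpos).
  - intros a b Hab. destruct (Nat.lt_gt_cases a b) as [[H|H] _]; auto.
    pose proof (Hmono a b H); lra. pose proof (Hmono b a H); lra.
  - intros a b Hab. apply Hiv. split.
    + apply sqrt_lt_R0. pose proof (D_lower rr a b (Hpos a) (Hpos b) Hab).
      assert (rr a <> rr b).
      { destruct (Nat.lt_gt_cases a b) as [[Hq|Hq] _]; auto.
        pose proof (Hmono a b Hq); lra. pose proof (Hmono b a Hq); lra. }
      destruct (Rtotal_order (rr a) (rr b)) as [Hl|[He|Hl]]; [nra|contradiction|nra].
    + pose proof (Hdist a b Hab). pose proof (Hle0 a). pose proof (Hle0 b). pose proof (Hr1 0%nat).
      destruct (Hbed 0%nat) as [Hb _]. lra.
  - apply good_all. intros i j k Hij Hjk.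
    assert (Hik : (i < k)%nat) by lia.
    pose proof (Hsep i j Hij). pose proof (Hsep j k Hjk). pose proof (dl_anti i j ltac:(lia)).
    pose proof (dl_anti i k ltac:(lia)). pose proof (Hpos i). pose proof (Hpos j). pose proof (Hpos k).
    pose proof (dl_bounds j). pose proof (dl_bounds k).
    assert (rr j <= dl i * rr i) by nra.
    assert (rr k <= dl i * rr j) by nra.
    pose proof (Hr1 i). destruct (Hbed i) as [Hb _].
    pose proof (Hmono i j Hij). pose proof (Hmono j k Hjk).
    assert (Dkj : sqrt (D rr k j) < be (dl i)) by (pose proof (Hdist k j ltac:(lia)); lra).
    assert (Dji : sqrt (D rr j i) < be (dl i)) by (pose proof (Hdist j i ltac:(lia)); lra).
    assert (Dki : sqrt (D rr k i) < be (dl i)) by (pose proof (Hdist k i ltac:(lia)); lra).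
    destruct (GoodTriple rr Sc k j i i) as [G1 [G2 G3]]; auto; try lia.
    + rewrite Em_sym. apply Em_lt; auto.
    + split; [|split]; apply Good_sym; auto.
  - intros eps A B He HA HAB S1 S2. destruct (Hbe eps He) as [_ Hk]. apply Hk; auto.
Qed.
Theorem proposition3p4 (h : R -> R)
  (h_nonneg : maps_nonneg h) (h0 : h 0 = 0) (hconc : concave_on_nonneg h)
  (hcond : ~ ratio_to_infty_at_0 h \/ ~ ratio_to_0_at_infty h) :
  exists (X : Type) (d : X -> X -> R),
    is_metric d /\ infinite_type X /\
    exists f : X -> R * R, forall x y, dist2 (f x) (f y) = h (d x y).
Proof.
  assert (HHh : HH h) by (split; [|split]; auto).
  pose proof (h_nonneg 1 ltac:(lra)) as H1.
  destruct (Req_dec (h 1) 0) as [Hz|Hnz].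
  - set (d := fun a b : nat => if Nat.eq_dec a b then 0 else 1).
    exists nat, d. split; [|split].
    + unfold d. split; [|split; [|split]].
      * intros x y. destruct (Nat.eq_dec x y); lra.
      * intros x y. destruct (Nat.eq_dec x y); split; intros; auto; try lra; contradiction.
      * intros x y. destruct (Nat.eq_dec x y), (Nat.eq_dec y x); subst; auto; contradiction.
      * intros x y z. destruct (Nat.eq_dec x z), (Nat.eq_dec x y), (Nat.eq_dec y z); subst; try lra.
        contradiction.
    + exact nat_infinite.
    + exists (fun _ => (0, 0)). intros x y. unfold dist2, d.
      replace ((fst (0, 0) - fst (0, 0)) ^ 2 + (snd (0, 0) - snd (0, 0)) ^ 2) with 0 by (simpl; ring).
      rewrite sqrt_0.
      destruct (Nat.eq_dec x y); auto.
  - assert (H1p : 0 < h 1) by lra.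
    destruct hcond as [Hc|Hc].
    + apply small_case; auto.
    + apply large_case; auto.
Qed.
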